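(* Let $(X,\|\cdot\|)$ be a normed linear space over $\mathbb{R}$ or $\mathbb{C}$, let $x_1,\dots,x_n\in X$, $a\in X\setminus\{0\}$, and let $p_1,\dots,p_n\ge 0$ with $\sum_{j=1}^n p_j=1$. Then $$\Big\|\sum_{j=1}^n p_jx_j\Big\|\,\|a\|+\frac12\sum_{j=1}^n p_j\|x_j-a\|^2\ \ge\ \frac12\|a\|^2.$$ The constant $\tfrac12$ on the right-hand side is best possible: if $X\ne\{0\}$, there is no constant $D>\tfrac12$ such that $\big\|\sum_{j=1}^n p_jx_j\big\|\,\|a\|+\frac12\sum_{j=1}^n p_j\|x_j-a\|^2\ge D\|a\|^2$ holds for all $n\ge1$, all $x_j\in X$, all $p_j\ge0$ with $\sum_j p_j=1$ and all $a\in X\setminus\{0\}$. *)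

(* Defs.v *)
From HB Require Import structures.
From mathcomp Require Import all_boot all_order all_algebra.
From mathcomp Require Import all_classical all_reals all_analysis.
Set Implicit Arguments. Unset Strict Implicit. Unset Printing Implicit Defensive.
Import Order.TTheory GRing.Theory Num.Theory.
Import numFieldNormedType.Exports.
Local Open Scope ring_scope.

Definition thm_lhs (K : numFieldType) (X : normedModType K) (n : nat)
  (x : 'I_n -> X) (p : 'I_n -> K) (a : X) : K :=
  `|\sum_(j < n) p j *: x j| * `|a| + 2^-1 * \sum_(j < n) p j * `|x j - a| ^+ 2.

(* Main.v *)
Require Import Defs.
From HB Require Import structures.
From mathcomp Require Import all_boot all_order all_algebra.
From mathcomp Require Import all_classical all_reals all_analysis.
From mathcomp Require Import ring.
Import Order.TTheory GRing.Theory Num.Theory.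
Import numFieldNormedType.Exports.
Local Open Scope ring_scope.

Lemma half_id (K : numFieldType) (t A : K) :
  t*A + 2^-1 * (A - t)^+2 = 2^-1 * A^+2 + 2^-1 * t^+2.
Proof. by field. Qed.

Lemma jensen_sq (K : numFieldType) n (p y : 'I_n -> K) :
  (forall j, 0 <= p j) -> (forall j, 0 <= y j) -> \sum_(j < n) p j = 1 ->
  (\sum_(j < n) p j * y j) ^+ 2 <= \sum_(j < n) p j * y j ^+ 2.
Proof.
move=> hp hy h1; set m := \sum_(j < n) p j * y j.
have hm : 0 <= m by apply: sumr_ge0 => j _; apply: mulr_ge0.
have H0 : 0 <= \sum_(j < n) p j * (y j - m) ^+ 2.
  apply: sumr_ge0 => j _; apply: mulr_ge0 => //.
  by apply: real_exprn_even_ge0 => //; apply: realB; apply: ger0_real.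
have E : \sum_(j < n) p j * (y j - m) ^+ 2 =
         \sum_(j < n) p j * y j ^+ 2 - m ^+ 2.
  rewrite (eq_bigr (fun j => (p j * y j ^+ 2 - (m * 2) * (p j * y j)) + m ^+ 2 * p j));
    last by move=> j _; ring.
  rewrite big_split sumrB /= -!mulr_sumr h1 -/m; ring.
by rewrite -subr_ge0 -E.
Qed.

Theorem theorem2p1 (K : numFieldType) (X : normedModType K) :
  (forall (n : nat) (x : 'I_n -> X) (p : 'I_n -> K) (a : X),
      a != 0 -> (forall j, 0 <= p j) -> \sum_(j < n) p j = 1 ->
      2^-1 * `|a| ^+ 2 <= thm_lhs x p a)
  /\
  ((exists y : X, y != 0) ->
   forall D : K, 2^-1 < D ->
   ~ (forall (n : nat) (x : 'I_n -> X) (p : 'I_n -> K) (a : X),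
        (0 < n)%N -> a != 0 -> (forall j, 0 <= p j) -> \sum_(j < n) p j = 1 ->
        D * `|a| ^+ 2 <= thm_lhs x p a)).
Proof.
split.
  move=> n x p a _ hp h1; rewrite /thm_lhs.
  set s := \sum_(j < n) p j *: x j.
  set m := \sum_(j < n) p j * `|x j - a|.
  have hJ := @jensen_sq _ _ p _ hp (fun j => normr_ge0 (x j - a)) h1.
  have hd : `|s - a| <= m.
    have -> : s - a = \sum_(j < n) p j *: (x j - a).
      rewrite (eq_bigr (fun j => p j *: x j - p j *: a)); last by move=> j _; rewrite scalerBr.
      by rewrite sumrB -scaler_suml h1 scale1r.
    apply: le_trans (ler_norm_sum _ _ _) _.
    by apply: ler_sum => j _; rewrite normrZ ger0_norm.
  have h2 : `|s - a| ^+ 2 <= m ^+ 2.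
    by apply: lerXn2r => //; rewrite nnegrE //; apply: le_trans hd.
  have h3 : (`|a| - `|s|) ^+ 2 <= `|s - a| ^+ 2.
    rewrite -real_normK; last by apply: realB; apply: ger0_real.
    apply: lerXn2r; rewrite ?nnegrE //.
    by rewrite distrC; apply: ler_dist_dist.
  apply: (@le_trans _ _ (`|s| * `|a| + 2^-1 * (`|a| - `|s|) ^+ 2)).
    by rewrite half_id lerDl; apply: mulr_ge0; rewrite ?invr_ge0 ?exprn_ge0.
  rewrite lerD2l; apply: ler_wpM2l; first by rewrite invr_ge0.
  exact: le_trans h3 (le_trans h2 hJ).
move=> [y hy] D hD H.
have := H 1%N (fun _ => 0) (fun _ => 1) y isT hy (fun _ => ler01); rewrite big_ord1 => /(_ erefl).
rewrite /thm_lhs !big_ord1 scaler0 normr0 mul0r add0r mul1r sub0r normrN.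
have hpos : 0 < `|y| ^+ 2 by rewrite exprn_gt0 // normr_gt0.
rewrite ler_pM2r // => h; by have := lt_le_trans hD h; rewrite ltxx.
Qed.
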